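(* For $r\ge1$ let $\mathring Y^{(n)}_r$ be the number of vertices $v\in V_n$ whose activity is at least $r$. Then for every $0<\varepsilon<1$, $$\sup_{n\ge1}\mathbf P\big(n^{-1}\mathring Y^{(n)}_r>\varepsilon\big)\to0\qquad\text{as } r\to\infty.$$
   Context: Preferred attachment affiliation model. Fix a real $\lambda>0$, an integer $k\ge 1$ and an integer $l\ge 0$ with $\lambda\le k+l$. At time $0$ a library contains books $w_1,\dots,w_l$, each with score $1$. For $n=0,1,2,\dots$, step $n+1$ proceeds as follows: $k$ new books $w_{l+nk+1},\dots,w_{l+(n+1)k}$ arrive, each with score $1$; then a customer $v_{n+1}$ arrives and, conditionally on the past and independently over books, downloads each book $w\in W_{n+1}=\{w_1,\dots,w_{l+(n+1)k}\}$ with probability $p_{n+1,s(w)}=\lambda s(w)/(l+(n+1)k+n\lambda)$, where $s(w)$ is the current score of $w$. Every book downloaded by $v_{n+1}$ then has its score increased by $1$. Let $V_n=\{v_1,\dots,v_n\}$. The activity of a customer $v$ is the number of books it downloaded. *)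

(* Defs.v *)
From Stdlib Require Import Reals List Arith.
Import ListNotations.
Open Scope R_scope.

(* A history is the list [D_1; ...; D_m] of download sets; D_i is a boolean
   list of length l + i*k, entry w (0-based) telling whether customer v_i
   downloaded book w_{w+1}. *)
Definition history := list (list bool).

Fixpoint bool_lists (m : nat) : list (list bool) :=
  match m with
  | O => [[]]
  | S m' => map (cons true) (bool_lists m') ++ map (cons false) (bool_lists m')
  end.

Definition score (h : history) (w : nat) : nat :=
  S (length (filter (fun D => nth w D false) h)).

(* probability that customer v_{n+1} (n = length h) downloads exactly the
   books in D, given the history h *)
Definition step_weight (lam : R) (k l : nat) (h : history) (D : list bool) : R :=
  let n := length h in
  let denom := INR (l + (n + 1) * k) + INR n * lam in
  fold_right Rmult 1
    (map (fun w => let p := lam * INR (score h w) / denom in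
                   if nth w D false then p else 1 - p)
         (seq 0 (l + (n + 1) * k))).

Fixpoint expect (lam : R) (k l : nat) (m : nat) (h : history)
  (f : history -> R) : R :=
  match m with
  | O => f h
  | S m' =>
      fold_right Rplus 0
        (map (fun D => step_weight lam k l h D * expect lam k l m' (h ++ [D]) f)
             (bool_lists (l + (length h + 1) * k)))
  end.

Definition activity (D : list bool) : nat := length (filter (fun b => b) D).

Definition Y_ring (r : nat) (h : history) : nat :=
  length (filter (fun D => Nat.leb r (activity D)) h).

Definition prob_Y_large (lam : R) (k l n r : nat) (eps : R) : R :=
  expect lam k l n []
    (fun h => if Rlt_dec eps (INR (Y_ring r h) / INR n) then 1 else 0).

(* Main.v *)
Require Import Defs.
From Stdlib Require Import Reals List Arith Lia Lra.
Import ListNotations.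
Open Scope R_scope.

Notation sumR := (fold_right Rplus 0).

Lemma sum_app (l1 l2 : list R) : sumR (l1 ++ l2) = sumR l1 + sumR l2.
Proof. induction l1; simpl; [lra | rewrite IHl1; lra]. Qed.

Lemma sum_scale {A} (f : A -> R) c (l : list A) :
  sumR (map (fun x => c * f x) l) = c * sumR (map f l).
Proof. induction l; simpl; [ring | rewrite IHl; ring]. Qed.

Lemma sum_plus {A} (f g : A -> R) (l : list A) :
  sumR (map (fun x => f x + g x) l) = sumR (map f l) + sumR (map g l).
Proof. induction l; simpl; [ring | rewrite IHl; ring]. Qed.

Lemma sum_le {A} (f g : A -> R) (l : list A) :
  (forall x, In x l -> f x <= g x) -> sumR (map f l) <= sumR (map g l).
Proof.
  induction l; simpl; intros H; [lra|].
  apply Rplus_le_compat; [apply H; auto | apply IHl; auto].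
Qed.

Lemma sum_ext {A} (f g : A -> R) (l : list A) :
  (forall x, f x = g x) -> sumR (map f l) = sumR (map g l).
Proof. intros H; f_equal; apply map_ext; auto. Qed.

Lemma sum_const1 L : forall s, sumR (map (fun _ : nat => 1) (seq s L)) = INR L.
Proof.
  induction L; intros s; cbn [seq map fold_right]; [reflexivity|].
  rewrite IHL, S_INR; ring.
Qed.

Definition W (m : nat) (p : nat -> R) (D : list bool) : R :=
  fold_right Rmult 1
    (map (fun w => if nth w D false then p w else 1 - p w) (seq 0 m)).

Lemma W_cons m p b D :
  W (S m) p (b :: D) = (if b then p 0%nat else 1 - p 0%nat) * W m (fun j => p (S j)) D.
Proof.
  unfold W. cbn [seq map fold_right]. rewrite <- seq_shift, map_map.
  destruct b; reflexivity.
Qed.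

Lemma sumW m : forall p, sumR (map (W m p) (bool_lists m)) = 1.
Proof.
  induction m; intros p.
  - simpl. unfold W; simpl. ring.
  - cbn [bool_lists]. rewrite map_app, sum_app, !map_map.
    rewrite (sum_ext _ (fun x => p 0%nat * W m (fun j => p (S j)) x))
      by (intros; rewrite W_cons; reflexivity).
    rewrite (sum_ext (fun x => W (S m) p (false :: x))
               (fun x => (1 - p 0%nat) * W m (fun j => p (S j)) x))
      by (intros; rewrite W_cons; reflexivity).
    rewrite !sum_scale, IHm. ring.
Qed.

Lemma sumWact m : forall p,
  sumR (map (fun D => W m p D * INR (activity D)) (bool_lists m))
  = sumR (map p (seq 0 m)).
Proof.
  induction m; intros p.
  - simpl. ring.
  - cbn [bool_lists]. rewrite map_app, sum_app, !map_map.
    rewrite (sum_ext _ (fun x => p 0%nat * W m (fun j => p (S j)) x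
                      + p 0%nat * (W m (fun j => p (S j)) x * INR (activity x))))
      by (intros; rewrite W_cons; unfold activity; cbn [filter length]; rewrite S_INR; ring).
    rewrite (sum_ext (fun x => W (S m) p (false :: x) * INR (activity (false :: x)))
               (fun x => (1 - p 0%nat) * (W m (fun j => p (S j)) x * INR (activity x))))
      by (intros; rewrite W_cons; unfold activity; cbn [filter length]; ring).
    rewrite sum_plus, !sum_scale, IHm, sumW.
    cbn [seq map fold_right]. rewrite <- seq_shift, map_map. ring.
Qed.

Lemma W_nonneg m p D : (forall j, 0 <= p j <= 1) -> 0 <= W m p D.
Proof.
  intros Hp. unfold W. induction (seq 0 m); simpl; [lra|].
  destruct (nth a D false); specialize (Hp a); nra.
Qed.

Definition pp (lam : R) (k l : nat) (h : history) (w : nat) : R :=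
  lam * INR (score h w) / (INR (l + (length h + 1) * k) + INR (length h) * lam).

Lemma step_weight_W lam k l h D :
  step_weight lam k l h D = W (l + (length h + 1) * k) (pp lam k l h) D.
Proof. reflexivity. Qed.

Lemma score_le h w : (score h w <= S (length h))%nat.
Proof. unfold score. apply le_n_S, filter_length_le. Qed.

Lemma pp_bounds lam k l (Hlam : 0 < lam) (Hk : (1 <= k)%nat) (Hlamkl : lam <= INR (k + l)) h j :
  0 <= pp lam k l h j <= 1.
Proof.
  unfold pp.
  set (n := length h).
  assert (HL : INR (k + l) <= INR (l + (n + 1) * k)) by (apply le_INR; nia).
  assert (Hk1 : 1 <= INR k) by (apply (le_INR 1); auto).
  assert (HLk : INR k <= INR (l + (n + 1) * k)) by (apply le_INR; nia).
  assert (Hn : 0 <= INR n) by apply pos_INR.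
  assert (Hs : INR (score h j) <= INR n + 1) by (rewrite <- S_INR; apply le_INR, score_le).
  assert (Hs0 : 0 <= INR (score h j)) by apply pos_INR.
  set (L := INR (l + (n + 1) * k)) in *.
  assert (Hd : 0 < L + INR n * lam) by nra.
  split.
  - apply Rmult_le_pos; [nra | left; apply Rinv_0_lt_compat; lra].
  - apply (Rmult_le_reg_r (L + INR n * lam)); [lra|].
    unfold Rdiv. rewrite Rmult_assoc, Rinv_l by lra. nra.
Qed.

Lemma sw_nonneg lam k l (Hlam : 0 < lam) (Hk : (1 <= k)%nat) (Hlamkl : lam <= INR (k + l)) h D :
  0 <= step_weight lam k l h D.
Proof. rewrite step_weight_W. apply W_nonneg. intros; apply pp_bounds; auto. Qed.

Lemma expect_S lam k l m h f : expect lam k l (S m) h f =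
  sumR (map (fun D => step_weight lam k l h D * expect lam k l m (h ++ [D]) f)
             (bool_lists (l + (length h + 1) * k))).
Proof. reflexivity. Qed.

Lemma expect_mono lam k l (Hlam : 0 < lam) (Hk : (1 <= k)%nat) (Hlamkl : lam <= INR (k + l)) m :
  forall h f g, (forall h', length h' = (length h + m)%nat -> f h' <= g h') ->
  expect lam k l m h f <= expect lam k l m h g.
Proof.
  induction m; intros h f g H.
  - simpl. apply H. lia.
  - rewrite !expect_S. apply sum_le. intros D _.
    apply Rmult_le_compat_l; [apply sw_nonneg; auto|].
    apply IHm. intros h' Hh'. apply H. rewrite Hh', length_app. simpl. lia.
Qed.

Lemma sum_aff {A} (w e : A -> R) a b (l : list A) :
  sumR (map (fun x => w x * (a * e x + b)) l)
  = a * sumR (map (fun x => w x * e x) l) + b * sumR (map w l).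
Proof. induction l; simpl; [ring | rewrite IHl; ring]. Qed.

Lemma sw_sum lam k l h :
  sumR (map (fun D => step_weight lam k l h D) (bool_lists (l + (length h + 1) * k))) = 1.
Proof. apply (sumW _ (pp lam k l h)). Qed.

Lemma expect_affine lam k l m : forall h f a b,
  expect lam k l m h (fun x => a * f x + b) = a * expect lam k l m h f + b.
Proof.
  induction m; intros h f a b.
  - reflexivity.
  - rewrite !expect_S.
    rewrite (sum_ext _ (fun D => step_weight lam k l h D * (a * expect lam k l m (h ++ [D]) f + b)))
      by (intros; rewrite IHm; reflexivity).
    rewrite sum_aff. rewrite sw_sum. ring.
Qed.

Lemma expect_unroll lam k l m : forall h f,
  expect lam k l (S m) h f = expect lam k l m h (fun h' => expect lam k l 1 h' f).
Proof.
  induction m; intros h f.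
  - reflexivity.
  - rewrite (expect_S lam k l (S m) h f), (expect_S lam k l m h).
    apply sum_ext. intros D. rewrite IHm. reflexivity.
Qed.

Definition T (h : history) : R := sumR (map (fun D => INR (activity D)) h).

Lemma T_app h D : T (h ++ [D]) = T h + INR (activity D).
Proof. unfold T. rewrite map_app, sum_app. simpl. ring. Qed.

Lemma T_nonneg h : 0 <= T h.
Proof. unfold T. induction h; simpl; [lra|]. pose proof (pos_INR (activity a)). lra. Qed.

Lemma sum_zero L : forall s, sumR (map (fun j : nat => if nth j (@nil bool) false then 1 else 0) (seq s L)) = 0.
Proof.
  induction L; intros s; cbn [seq map fold_right]; [reflexivity|].
  rewrite IHL. destruct s; simpl; ring.
Qed.

Lemma cnt_le D : forall s L,
  sumR (map (fun j => if nth j D false then 1 else 0) (seq s L)) <= INR (activity D).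
Proof.
  induction D as [|b D IH]; intros s L.
  - rewrite sum_zero. simpl; lra.
  - assert (Hact : INR (activity (b :: D)) = (if b then 1 else 0) + INR (activity D)).
    { unfold activity. destruct b; cbn [filter length]; [rewrite S_INR|]; ring. }
    rewrite Hact.
    assert (Hsh : forall s L, sumR (map (fun j => if nth j (b :: D) false then 1 else 0) (seq (S s) L))
               = sumR (map (fun j => if nth j D false then 1 else 0) (seq s L))).
    { intros s' L'. rewrite <- seq_shift, map_map. reflexivity. }
    destruct s as [|s].
    + destruct L as [|L].
      * simpl. pose proof (pos_INR (activity D)). destruct b; lra.
      * cbn [seq map fold_right]. rewrite Hsh. specialize (IH 0%nat L).
        simpl (nth 0 (b :: D) false). lra.
    + rewrite Hsh. specialize (IH s L). destruct b; lra.
Qed.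

Lemma cnt_h h : forall s L,
  sumR (map (fun j => INR (length (filter (fun D => nth j D false) h))) (seq s L)) <= T h.
Proof.
  induction h as [|D h IH]; intros s L.
  - unfold T. simpl.
    rewrite (sum_ext _ (fun j => 0 * 1)) by (intros; simpl; ring).
    rewrite sum_scale. lra.
  - rewrite (sum_ext _ (fun j => (if nth j D false then 1 else 0)
                   + INR (length (filter (fun D0 => nth j D0 false) h)))).
    2:{ intros j. cbn [filter]. destruct (nth j D false); cbn [length]; [rewrite S_INR|]; ring. }
    rewrite sum_plus. unfold T; cbn [map fold_right]. fold (T h).
    pose proof (cnt_le D s L). pose proof (IH s L). lra.
Qed.

Lemma score_sum h L : sumR (map (fun j => INR (score h j)) (seq 0 L)) <= INR L + T h.
Proof.
  unfold score.
  rewrite (sum_ext _ (fun j => INR (length (filter (fun D => nth j D false) h)) + 1))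
    by (intros; rewrite S_INR; ring).
  rewrite sum_plus, sum_const1. pose proof (cnt_h h 0 L). lra.
Qed.

Lemma step_bound lam k l (Hlam : 0 < lam) (Hk : (1 <= k)%nat) (Hlamkl : lam <= INR (k + l)) h :
  let L := INR (l + (length h + 1) * k) in
  let den := L + INR (length h) * lam in
  expect lam k l 1 h T <= (1 + lam / den) * T h + lam * L / den.
Proof.
  intros L den.
  rewrite expect_S. simpl expect.
  rewrite (sum_ext _ (fun D => step_weight lam k l h D * T h
              + step_weight lam k l h D * INR (activity D)))
    by (intros; rewrite T_app; ring).
  rewrite sum_plus.
  rewrite (sum_ext (fun D => step_weight lam k l h D * T h) (fun D => T h * step_weight lam k l h D))
    by (intros; ring).
  rewrite sum_scale, sw_sum.
  change (fun D => step_weight lam k l h D * INR (activity D)) with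
     (fun D => W (l + (length h + 1) * k) (pp lam k l h) D * INR (activity D)).
  rewrite sumWact. unfold pp.
  fold L den.
  rewrite (sum_ext _ (fun j => (lam / den) * INR (score h j))) by (intros; unfold Rdiv; ring).
  rewrite sum_scale.
  assert (Hk1 : 1 <= INR k) by (apply (le_INR 1); auto).
  assert (HLk : INR k <= L) by (apply le_INR; nia).
  assert (Hn : 0 <= INR (length h)) by apply pos_INR.
  assert (Hd : 0 < den) by (unfold den; nra).
  assert (Hq : 0 <= lam / den) by (unfold Rdiv; apply Rmult_le_pos; [lra | left; apply Rinv_0_lt_compat; lra]).
  pose proof (score_sum h (l + (length h + 1) * k)). fold L in H.
  assert (lam / den * sumR (map (fun j => INR (score h j)) (seq 0 (l + (length h + 1) * k)))
          <= lam / den * (L + T h)) by (apply Rmult_le_compat_l; auto).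
  unfold Rdiv in *. nra.
Qed.

Lemma ET lam k l (Hlam : 0 < lam) (Hk : (1 <= k)%nat) (Hlamkl : lam <= INR (k + l)) m :
  expect lam k l m [] T <= INR m * lam.
Proof.
  induction m.
  - simpl. unfold T; simpl. lra.
  - rewrite expect_unroll.
    set (L := INR (l + (m + 1) * k)).
    set (den := L + INR m * lam).
    assert (Hk1 : 1 <= INR k) by (apply (le_INR 1); auto).
    assert (HLk : INR k <= L) by (apply le_INR; nia).
    assert (Hn : 0 <= INR m) by apply pos_INR.
    assert (Hd : 0 < den) by (unfold den; nra).
    eapply Rle_trans.
    { apply (expect_mono lam k l Hlam Hk Hlamkl m [] _ (fun h => (1 + lam / den) * T h + lam * L / den)).
      intros h' Hh'. simpl in Hh'. pose proof (step_bound lam k l Hlam Hk Hlamkl h') as Hs.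
      cbv zeta in Hs. rewrite Hh' in Hs. exact Hs. }
    rewrite expect_affine.
    assert (Hc : 0 <= 1 + lam / den) by (unfold Rdiv; pose proof (Rinv_0_lt_compat den Hd); assert (0 <= lam * / den) by (apply Rmult_le_pos; lra); lra).
    apply Rmult_le_compat_l with (r := 1 + lam / den) in IHm; auto.
    rewrite S_INR.
    assert ((1 + lam / den) * (INR m * lam) + lam * L / den = (INR m + 1) * lam).
    { unfold den in *. field. lra. }
    lra.
Qed.

Lemma Y_le_T r h : INR r * INR (Y_ring r h) <= T h.
Proof.
  induction h as [|D h IH].
  - unfold Y_ring, T; simpl. lra.
  - unfold Y_ring in *. unfold T in *. cbn [filter map fold_right].
    destruct (Nat.leb r (activity D)) eqn:E.
    + apply Nat.leb_le in E. apply le_INR in E. cbn [length]. rewrite S_INR. lra.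
    + pose proof (pos_INR (activity D)). lra.
Qed.

Theorem mainTheorem5 (lam : R) (k l : nat)
  (Hlam : 0 < lam) (Hk : (1 <= k)%nat) (Hlamkl : lam <= INR (k + l))
  (eps : R) (Heps : 0 < eps < 1) :
  forall delta : R, 0 < delta ->
  exists r0 : nat, forall r : nat, (r0 <= r)%nat ->
    forall n : nat, (1 <= n)%nat -> prob_Y_large lam k l n r eps <= delta.
Proof.
  intros delta Hdelta.
  assert (Hpos : 0 < eps * delta / lam).
  { unfold Rdiv. apply Rmult_lt_0_compat; [nra | apply Rinv_0_lt_compat; lra]. }
  destruct (archimed_cor1 _ Hpos) as [N [HN HN0]].
  exists N. intros r Hr n Hn.
  assert (HN' : 0 < INR N) by (apply lt_0_INR; lia).
  assert (HrN : INR N <= INR r) by (apply le_INR; lia).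
  assert (Hnp : 0 < INR n) by (apply lt_0_INR; lia).
  assert (Hlt : lam < eps * delta * INR N).
  { apply (Rmult_lt_compat_r (lam * INR N)) in HN; [|nra].
    replace (/ INR N * (lam * INR N)) with lam in HN by (field; lra).
    replace (eps * delta / lam * (lam * INR N)) with (eps * delta * INR N) in HN by (field; lra).
    exact HN. }
  set (c := INR r * INR n * eps).
  assert (Hc : 0 < c) by (unfold c; apply Rmult_lt_0_compat; [nra|lra]).
  unfold prob_Y_large.
  eapply Rle_trans.
  { apply (expect_mono lam k l Hlam Hk Hlamkl n [] _ (fun h => / c * T h + 0)).
    intros h' _.
    pose proof (T_nonneg h'). pose proof (Rinv_0_lt_compat c Hc).
    destruct (Rlt_dec eps (INR (Y_ring r h') / INR n)) as [Hl|Hl].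
    - pose proof (Y_le_T r h').
      assert (eps * INR n < INR (Y_ring r h')).
      { apply (Rmult_lt_compat_r (INR n)) in Hl; [|lra].
        unfold Rdiv in Hl. rewrite Rmult_assoc, Rinv_l in Hl by lra. lra. }
      assert (c <= T h').
      { unfold c. assert (0 <= INR r) by apply pos_INR.
        assert (INR r * (eps * INR n) <= INR r * INR (Y_ring r h')) by (apply Rmult_le_compat_l; lra).
        lra. }
      assert (Hcc : / c * c <= / c * T h') by (apply Rmult_le_compat_l; lra).
      rewrite Rinv_l in Hcc by lra. lra.
    - nra. }
  rewrite expect_affine.
  pose proof (ET lam k l Hlam Hk Hlamkl n).
  pose proof (Rinv_0_lt_compat c Hc).
  assert (/ c * expect lam k l n [] T <= / c * (INR n * lam)) by (apply Rmult_le_compat_l; lra).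
  assert (/ c * (INR n * lam) <= delta).
  { apply (Rmult_le_reg_l c); [lra|]. rewrite <- Rmult_assoc, Rinv_r, Rmult_1_l by lra.
    unfold c.
    assert (Hed : 0 < eps * delta) by nra.
    assert (lam <= eps * delta * INR r) by nra.
    assert (INR n * lam <= INR n * (eps * delta * INR r)) by (apply Rmult_le_compat_l; lra).
    nra. }
  lra.
Qed.
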